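(* Consider the network and loss from the context. Let $\overline{\mathbf{P}}$ be a stationary point, let $i_0\in I$, and let $\overline{\mathbf{P}}'$ be obtained from $\overline{\mathbf{P}}$ by unit replication of neuron $i_0$ with coefficients $(\beta_l,\gamma_l)_{l\in L}$ (so $\beta_l>0$ and $\sum_{l\in L}\beta_l\gamma_l=1$). Then $\overline{\mathbf{P}}'$ is a stationary point of the loss of the widened network if and only if at least one of the following holds: (1) every tangential derivative of $\mathcal{L}$ with respect to $\mathbf{w}_{i_0}$ at $\overline{\mathbf{P}}$ equals $0$, i.e. $\sum_{j\in J}\overline{h}_{ji_0}\mathbf{d}_{ji_0}^{\mathbf{v}}\cdot\mathbf{v}=0$ for every tangential direction $\mathbf{v}$ of $\overline{\mathbf{w}}_{i_0}$; (2) $\gamma_l\ge0$ for all $l\in L$. Moreover, if $\overline{\mathbf{P}}$ is a type-1 local minimum, then $\overline{\mathbf{P}}'$ is a type-1 local minimum of the loss of the widened network if and only if at least one of the following holds: (1) every tangential derivative of $\mathcal{L}$ with respect to $\mathbf{w}_{i_0}$ at $\overline{\mathbf{P}}$ equals $0$; (2) $\gamma_l>0$ for all $l\in L$.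
   Context: Fix an integer $d>1$, finite index sets $I$ (hidden), $J$ (output), $K$ (samples), reals $\alpha^+\neq\alpha^-$, $\rho(z)=\alpha^+z$ for $z\ge0$, $\rho(z)=\alpha^-z$ for $z<0$ (componentwise). Parameters $\mathbf{P}$ consist of input weights $\mathbf{w}_i\in\mathbb{R}^d$ and output weights $h_{ji}$ ($i\in I$, $j\in J$); output $\hat{\mathbf{y}}(\mathbf{P};\mathbf{x})_j=\sum_{i\in I}h_{ji}\rho(\mathbf{w}_i\cdot\mathbf{x})$; training data $(\mathbf{x}_k,\mathbf{y}_k)_{k\in K}$; loss $\mathcal{L}(\mathbf{P})=\frac12\sum_k\|\hat{\mathbf{y}}(\mathbf{P};\mathbf{x}_k)-\mathbf{y}_k\|^2$; $e_{kj}=\hat y_{kj}-y_{kj}$. The same definitions apply to a network with any finite hidden index set. Stationary point: $\overline{\mathbf{P}}$ with $\lim_{\alpha\to0^+}\frac{\mathcal{L}(\overline{\mathbf{P}}+\alpha\mathbf{d})-\mathcal{L}(\overline{\mathbf{P}})}{\alpha}\ge0$ for all directions $\mathbf{d}$. Tangential directions of $\mathbf{w}_i$: unit vectors orthogonal to $\mathbf{w}_i$ if $\mathbf{w}_i\ne\mathbf{0}$; any unit vector if $\mathbf{w}_i=\mathbf{0}$. For a tangential direction $\mathbf{v}$, $\mathbf{d}_{ji}^{\mathbf{v}}=\lim_{\Delta\to0^+}\big(\sum_{k:(\mathbf{w}_i+\Delta\mathbf{v})\cdot\mathbf{x}_k>0}\alpha^+e_{kj}\mathbf{x}_k+\sum_{k:(\mathbf{w}_i+\Delta\mathbf{v})\cdot\mathbf{x}_k<0}\alpha^-e_{kj}\mathbf{x}_k\big)$,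 and the tangential derivative $\lim_{\Delta\to0^+}\frac{\mathcal{L}(\ldots,\mathbf{w}_i+\Delta\mathbf{v},\ldots)-\mathcal{L}(\ldots,\mathbf{w}_i,\ldots)}{\Delta}$ equals $\sum_{j}h_{ji}\mathbf{d}_{ji}^{\mathbf{v}}\cdot\mathbf{v}$. Escape neuron: at a stationary point, hidden neuron $i$ is an escape neuron iff there exist $j'\in J$ and a tangential direction $\mathbf{v}$ of $\mathbf{w}_i$ with $\sum_{j}h_{ji}\mathbf{d}_{ji}^{\mathbf{v}}\cdot\mathbf{v}=0$ and $\mathbf{d}_{j'i}^{\mathbf{v}}\cdot\mathbf{v}\ne0$. A type-1 local minimum is a local minimum of the loss (a stationary point) at which no hidden neuron is an escape neuron. Unit replication: given $\mathbf{P}$ and $i_0\in I$, replace neuron $i_0$ by a finite set of new hidden neurons $\{i_0^l: l\in L\}$ with $\mathbf{w}_{i_0^l}=\beta_l\mathbf{w}_{i_0}$ and $h_{ji_0^l}=\gamma_lh_{ji_0}$ for all $j\in J$, where $\beta_l>0$ for all $l$ and $\sum_{l\in L}\beta_l\gamma_l=1$; all other neurons are unchanged. This preserves the network function. *)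

(* Defs.v *)
From HB Require Import structures.
From mathcomp Require Import all_boot all_order all_algebra.
From mathcomp Require Import all_classical all_reals all_analysis.
Set Implicit Arguments.
Unset Strict Implicit.
Unset Printing Implicit Defensive.
Import Order.TTheory GRing.Theory Num.Theory.
Import numFieldNormedType.Exports.
Local Open Scope classical_set_scope.
Local Open Scope ring_scope.

Section Network.
Variables (R : realType) (d : nat).
Variables (ap am : R).
Variables (J K : finType) (x : K -> 'rV[R]_d) (y : K -> J -> R).

Definition rho (z : R) : R := if 0 <= z then ap * z else am * z.

Definition dotv (u v : 'rV[R]_d) : R := \sum_(c < d) u ord0 c * v ord0 c.

Section Hidden.
Variable H : finType.

Definition output (w : H -> 'rV[R]_d) (h : J -> H -> R) (z : 'rV[R]_d) (j : J) : R :=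
  \sum_(i : H) h j i * rho (dotv (w i) z).

Definition err (w : H -> 'rV[R]_d) (h : J -> H -> R) (k : K) (j : J) : R :=
  output w h (x k) j - y k j.

Definition loss (w : H -> 'rV[R]_d) (h : J -> H -> R) : R :=
  2^-1 * \sum_(k : K) \sum_(j : J) (err w h k j) ^+ 2.

Definition shift_w (w dw : H -> 'rV[R]_d) (a : R) : H -> 'rV[R]_d :=
  fun i => w i + a *: dw i.
Definition shift_h (h dh : J -> H -> R) (a : R) : J -> H -> R :=
  fun j i => h j i + a * dh j i.

Definition stationary (w : H -> 'rV[R]_d) (h : J -> H -> R) : Prop :=
  forall (dw : H -> 'rV[R]_d) (dh : J -> H -> R),
    exists l : R,
      ((loss (shift_w w dw a) (shift_h h dh a) - loss w h) / a) @[a --> 0^'+] --> l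
      /\ 0 <= l.

Definition local_min (w : H -> 'rV[R]_d) (h : J -> H -> R) : Prop :=
  exists2 e : R, 0 < e &
    forall (w' : H -> 'rV[R]_d) (h' : J -> H -> R),
      (forall i (c : 'I_d), `|w' i ord0 c - w i ord0 c| < e) ->
      (forall j i, `|h' j i - h j i| < e) ->
      loss w h <= loss w' h'.

Definition tangential (wi v : 'rV[R]_d) : Prop :=
  dotv v v = 1 /\ (wi != 0 -> dotv wi v = 0).

Definition dvec (w : H -> 'rV[R]_d) (h : J -> H -> R) (j : J) (i : H)
    (v : 'rV[R]_d) : 'rV[R]_d :=
  lim ((\sum_(k | 0 < dotv (w i + D *: v) (x k)) (ap * err w h k j) *: x k
        + \sum_(k | dotv (w i + D *: v) (x k) < 0) (am * err w h k j) *: x k)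
       @[D --> 0^'+]).

Definition tanderiv (w : H -> 'rV[R]_d) (h : J -> H -> R) (i : H)
    (v : 'rV[R]_d) : R :=
  \sum_(j : J) h j i * dotv (dvec w h j i v) v.

Definition escape_neuron (w : H -> 'rV[R]_d) (h : J -> H -> R) (i : H) : Prop :=
  exists (j' : J) (v : 'rV[R]_d),
    [/\ tangential (w i) v, tanderiv w h i v = 0 & dotv (dvec w h j' i v) v != 0].

Definition type1_local_min (w : H -> 'rV[R]_d) (h : J -> H -> R) : Prop :=
  local_min w h /\ stationary w h /\ forall i : H, ~ escape_neuron w h i.

End Hidden.
End Network.

Definition rep_hidden (I : finType) (i0 : I) (L : finType) : finType :=
  ({i : I | i != i0} + L)%type.

Section Replication.
Variables (R : realType) (d : nat) (J I L : finType) (i0 : I).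
Variables (beta gamma : L -> R).

Definition rep_w (w : I -> 'rV[R]_d) : rep_hidden i0 L -> 'rV[R]_d :=
  fun u => match u with
           | inl i => w (val i)
           | inr l => beta l *: w i0
           end.

Definition rep_h (h : J -> I -> R) : J -> rep_hidden i0 L -> R :=
  fun j u => match u with
             | inl i => h j (val i)
             | inr l => gamma l * h j i0
             end.
End Replication.

(* Main.v *)
Require Import Defs.
From HB Require Import structures.
From mathcomp Require Import all_boot all_order all_algebra.
From mathcomp Require Import all_classical all_reals all_analysis.
From mathcomp Require Import ring lra.
Import Order.TTheory GRing.Theory Num.Theory.
Import numFieldNormedType.Exports.
Local Open Scope classical_set_scope.
Local Open Scope ring_scope.
Set Implicit Arguments.
Unset Strict Implicit.
Unset Printing Implicit Defensive.

Section Dot.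
Variables (R : realType) (d : nat).
Local Notation dot := (@dotv R d).

Lemma dotC (u v : 'rV[R]_d) : dot u v = dot v u.
Proof. by rewrite /dotv; apply: eq_bigr => c _; rewrite mulrC. Qed.

Lemma dotDl (u v z : 'rV[R]_d) : dot (u + v) z = dot u z + dot v z.
Proof. by rewrite /dotv -big_split; apply: eq_bigr => c _; rewrite !mxE mulrDl. Qed.

Lemma dotZl a (u z : 'rV[R]_d) : dot (a *: u) z = a * dot u z.
Proof. by rewrite /dotv mulr_sumr; apply: eq_bigr => c _; rewrite !mxE mulrA. Qed.

Lemma dotNl (u z : 'rV[R]_d) : dot (- u) z = - dot u z.
Proof. by rewrite -scaleN1r dotZl mulN1r. Qed.

Lemma dotBl (u v z : 'rV[R]_d) : dot (u - v) z = dot u z - dot v z.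
Proof. by rewrite dotDl dotNl. Qed.

Lemma dot0l (z : 'rV[R]_d) : dot 0 z = 0.
Proof. by rewrite /dotv big1 // => c _; rewrite mxE mul0r. Qed.

Lemma dotDr (u v z : 'rV[R]_d) : dot z (u + v) = dot z u + dot z v.
Proof. by rewrite dotC dotDl !(dotC z). Qed.
Lemma dotZr a (u z : 'rV[R]_d) : dot z (a *: u) = a * dot z u.
Proof. by rewrite dotC dotZl dotC. Qed.
Lemma dotNr (u z : 'rV[R]_d) : dot z (- u) = - dot z u.
Proof. by rewrite dotC dotNl dotC. Qed.
Lemma dotBr (u v z : 'rV[R]_d) : dot z (u - v) = dot z u - dot z v.
Proof. by rewrite dotDr dotNr. Qed.
Lemma dot0r (z : 'rV[R]_d) : dot z 0 = 0.
Proof. by rewrite dotC dot0l. Qed.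

Lemma dot_suml (T : Type) (s : seq T) (P : pred T) (f : T -> 'rV[R]_d) z :
  dot (\sum_(t <- s | P t) f t) z = \sum_(t <- s | P t) dot (f t) z.
Proof.
elim/big_rec2: _ => [|t a b _ IH]; first by rewrite dot0l.
by rewrite dotDl IH.
Qed.

Lemma dot_ge0 (u : 'rV[R]_d) : 0 <= dot u u.
Proof. by rewrite /dotv sumr_ge0 // => c _; rewrite -expr2 sqr_ge0. Qed.

Lemma dot_eq0 (u : 'rV[R]_d) : dot u u = 0 -> u = 0.
Proof.
move=> /eqP; rewrite /dotv psumr_eq0 => [/allP H|c _]; last by rewrite -expr2 sqr_ge0.
apply/rowP => c; rewrite mxE; have := H c (mem_index_enum c).
by rewrite -expr2 sqrf_eq0 => /eqP.
Qed.

Lemma farkas_set (T : finType) (n : nat) : forall (S : {set T}) (l : T -> 'rV[R]_d) (a : 'rV[R]_d),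
  #|S| = n ->
  (forall u, (forall k, k \in S -> 0 <= dot (l k) u) -> 0 <= dot a u) ->
  exists lam : T -> R, (forall k, 0 <= lam k) /\ a = \sum_(k in S) lam k *: l k.
Proof.
elim: n => [|n IH] S l a cardS H.
  exists (fun=> 0); split => //; rewrite big1; last by move=> k _; rewrite scale0r.
  have S0 k : k \in S = false.
    apply/negP => kS; suff: (0 < #|S|)%N by rewrite cardS.
    by apply/card_gt0P; exists k.
  have := H (- a); rewrite dotNr oppr_ge0 => /(_ _) Ha.
  apply: dot_eq0; apply/le_anti; rewrite dot_ge0 andbT Ha // => k; by rewrite S0.
have [m mS] : exists m : T, m \in S.
  have: (0 < #|S|)%N by rewrite cardS.
  by move/card_gt0P.
have cardS' : #|S :\ m| = n by rewrite (cardsD1 m S) mS in cardS; case: cardS.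
case: (boolp.pselect (forall u, (forall k, k \in S :\ m -> 0 <= dot (l k) u) -> 0 <= dot a u)) => [H'|].
  have [lam [lam0 ->]] := IH _ l a cardS' H'.
  exists (fun k => if k == m then 0 else lam k); split.
    by move=> k; case: ifP.
  rewrite (bigD1 m mS) /= eqxx scale0r add0r.
  apply: eq_big => [k|k]; first by rewrite !inE andbC.
  by rewrite ?inE => /andP[G1 G2]; rewrite ?(negbTE G1) ?(negbTE G2).
move=> /boolp.existsNP [u0 /boolp.not_implyP [Hu0 /negP]]; rewrite -ltNge => au0.
set q := dot (l m) u0.
have q0 : q < 0.
  rewrite ltNge; apply/negP => q0; move: au0; rewrite ltNge H // => k kS.
  case: (eqVneq k m) => [->//|km]; apply: Hu0; by rewrite !inE km.
pose l' k := l k - (dot (l k) u0 / q) *: l m.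
pose a' := a - (dot a u0 / q) *: l m.
pose pi u := u - (dot (l m) u / q) *: u0.
have Epi v u : dot v (pi u) = dot v u - (dot v u0 / q) * dot (l m) u.
  rewrite /pi dotBr dotZr; ring.
have Hl' k u : dot (l' k) u = dot (l k) (pi u).
  by rewrite Epi /l' dotBl dotZl.
have Ha' u : dot a' u = dot a (pi u).
  by rewrite Epi /a' dotBl dotZl.
have pim u : dot (l m) (pi u) = 0.
  by rewrite Epi /q mulfV ?lt_eqF // mul1r subrr.
have H2 : forall u, (forall k, k \in S :\ m -> 0 <= dot (l' k) u) -> 0 <= dot a' u.
  move=> u Hu; rewrite Ha'; apply: H => k kS.
  case: (eqVneq k m) => [->|km]; first by rewrite pim.
  by rewrite -Hl'; apply: Hu; rewrite !inE km.
have [lam [lam0 Ea']] := IH _ l' a' cardS' H2.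
pose mu := (dot a u0 - \sum_(k in S :\ m) lam k * dot (l k) u0) / q.
have mu0 : 0 <= mu.
  rewrite /mu ler_ndivlMr // mul0r subr_le0; apply: le_trans (ltW au0) _.
  by apply: sumr_ge0 => k kS; apply: mulr_ge0 => //; apply: Hu0.
exists (fun k => if k == m then mu else lam k); split.
  by move=> k; case: ifP.
rewrite (bigD1 m mS) /= eqxx.
have -> : \sum_(i in S | i != m) (if i == m then mu else lam i) *: l i
    = \sum_(i in S :\ m) lam i *: l i.
  apply: eq_big => [k|k]; first by rewrite !inE andbC.
  by rewrite ?inE => /andP[G1 G2]; rewrite ?(negbTE G1) ?(negbTE G2).
have -> : a = a' + (dot a u0 / q) *: l m by rewrite /a' subrK.
rewrite Ea' /l'.
have -> : \sum_(i in S :\ m) lam i *: (l i - (dot (l i) u0 / q) *: l m)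
   = \sum_(i in S :\ m) lam i *: l i - (\sum_(i in S :\ m) lam i * dot (l i) u0 / q) *: l m.
  rewrite scaler_suml -sumrB; apply: eq_bigr => k _.
  by rewrite scalerBr scalerA mulrA.
rewrite /mu -addrA addrC; congr (_ + _).
rewrite -scaleNr -scalerDl; congr (_ *: _).
rewrite mulrBl addrC; congr (_ - _).
rewrite mulr_suml; apply: eq_bigr => k _. done.
Qed.


Lemma farkas (T : finType) (l : T -> 'rV[R]_d) (a : 'rV[R]_d) :
  (forall u, (forall k, 0 <= dot (l k) u) -> 0 <= dot a u) ->
  exists lam : T -> R, (forall k, 0 <= lam k) /\ a = \sum_k lam k *: l k.
Proof.
move=> H; have [lam [lam0 E]] := @farkas_set T _ (finset.setTfor T) l a erefl
  (fun u Hu => H u (fun k => Hu k (finset.in_setT k))).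
exists lam; split => //; rewrite E; apply: eq_bigl => k; by rewrite finset.in_setT.
Qed.

Lemma dot_sumZ (T : finType) (c : T -> R) (l : T -> 'rV[R]_d) u :
  dot (\sum_k c k *: l k) u = \sum_k c k * dot (l k) u.
Proof. rewrite dot_suml; apply: eq_bigr => k _; by rewrite dotZl. Qed.

Lemma polyhedral (T : finType) (l : T -> 'rV[R]_d) (A B : 'rV[R]_d) :
  (forall u, (forall k, 0 <= dot (l k) u) -> 0 <= dot A u) ->
  (forall u, (forall k, 0 <= dot (l k) u) -> dot A u = 0 -> dot B u = 0) ->
  exists c, 0 <= c /\
    forall u, (forall k, 0 <= dot (l k) u) -> `|dot B u| <= c * dot A u.
Proof.
move=> HA HB.
have [lam [lam0 EA]] := farkas HA.
pose lF (t : T + T) := match t with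
  | inl k => l k | inr k => if 0 < lam k then - l k else 0 end.
have HF : forall u, (forall t, 0 <= dot (lF t) u) -> dot B u = 0.
  move=> u Hu; apply: HB; first by move=> k; exact: (Hu (inl k)).
  rewrite EA dot_sumZ big1 // => k _.
  have := Hu (inr k); have := Hu (inl k); rewrite /lF.
  case: ifP => [lk|]; last first.
    move=> /negbT; rewrite -leNgt => lk0 _ _.
    have -> : lam k = 0 by apply/le_anti; rewrite lk0 lam0.
    by rewrite mul0r.
  rewrite dotNl oppr_ge0 => H1 H2.
  have -> : dot (l k) u = 0 by apply/le_anti; rewrite H1 H2.
  by rewrite mulr0.
have [mu [mu0 Emu]] := @farkas _ lF (- B)
  ltac:(by move=> u Hu; rewrite dotNl (HF u Hu) oppr0).
have [nu [nu0 Enu]] := @farkas _ lF B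
  ltac:(by move=> u Hu; rewrite (HF u Hu)).
have Aub : forall u, (forall k, 0 <= dot (l k) u) -> forall k,
    lam k * dot (l k) u <= dot A u.
  move=> u Hu k; rewrite EA dot_sumZ (bigD1 k) //= lerDl.
  by apply: sumr_ge0 => i _; apply: mulr_ge0.
have claim : forall rh si : T + T -> R, (forall t, 0 <= rh t) ->
    (forall t, 0 <= si t) ->
    \sum_t rh t *: lF t + \sum_t si t *: lF t = 0 ->
    forall u, (forall k, 0 <= dot (l k) u) ->
    dot (\sum_t rh t *: lF t) u <=
    (\sum_k (if 0 < lam k then (rh (inr k) + si (inr k)) / lam k else 0))
      * dot A u.
  move=> rh si rh0 si0 E0 u Hu.
  have E1 : \sum_t (rh t + si t) * dot (lF t) u = 0.
    have : dot (\sum_t rh t *: lF t + \sum_t si t *: lF t) u = 0.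
      by rewrite E0 dot0l.
    rewrite dotDl !dot_sumZ -big_split /= => E; apply: (etrans _ E).
    by apply: eq_bigr => t _; rewrite mulrDl.
  rewrite big_sumType /= in E1.
  rewrite dot_sumZ big_sumType /=.
  apply: (@le_trans _ _ (\sum_k (rh (inl k) + si (inl k)) * dot (l k) u)).
    rewrite -[X in _ <= X]addr0; apply: lerD.
      apply: ler_sum => k _; apply: ler_wpM2r => //; by rewrite lerDl.
    apply: sumr_le0 => k _; case: ifP => _; last by rewrite dot0l mulr0.
    by rewrite dotNl mulrN oppr_le0 mulr_ge0.
  move/eqP: E1; rewrite addr_eq0 => /eqP ->.
  rewrite -sumrN mulr_suml; apply: ler_sum => k _.
  case: ifP => lk; last by rewrite dot0l mulr0 oppr0 mul0r.
  rewrite dotNl mulrN opprK.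
  rewrite -mulrA; apply: ler_wpM2l; first by rewrite addr_ge0.
  by rewrite ler_pdivlMl // Aub.
pose c (rh si : T + T -> R) :=
  \sum_k (if 0 < lam k then (rh (inr k) + si (inr k)) / lam k else 0).
have c0 : forall rh si : T + T -> R, (forall t, 0 <= rh t) ->
    (forall t, 0 <= si t) -> 0 <= c rh si.
  move=> rh si rh0 si0; apply: sumr_ge0 => k _; case: ifP => // lk.
  by apply: divr_ge0; [rewrite addr_ge0|exact: ltW].
exists (c mu nu + c nu mu); split; first by rewrite addr_ge0 // c0.
move=> u Hu.
have Au0 := HA u Hu.
have E1 : \sum_t mu t *: lF t + \sum_t nu t *: lF t = 0 by rewrite -Emu -Enu addNr.
have E2 : \sum_t nu t *: lF t + \sum_t mu t *: lF t = 0 by rewrite addrC.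
have H1 := claim mu nu mu0 nu0 E1 u Hu.
have H2 := claim nu mu nu0 mu0 E2 u Hu.
rewrite -Emu dotNl in H1; rewrite -Enu in H2.
rewrite mulrDl; case: (lerP 0 (dot B u)) => B0.
  rewrite ger0_norm //; apply: le_trans H2 _; rewrite lerDr.
  by apply: mulr_ge0 => //; apply: c0.
rewrite ltr0_norm //; apply: le_trans H1 _; rewrite lerDl.
by apply: mulr_ge0 => //; apply: c0.
Qed.

End Dot.

Section Lim.
Variable R : realType.

Lemma cvg_fsum (T : finType) (F : set_system R) (FF : Filter F)
  (f : T -> R -> R) (l : T -> R) :
  (forall t, f t @ F --> l t) -> (fun a => \sum_t f t a) @ F --> \sum_t l t.
Proof.
move=> Hf.
have gen : forall s : seq T,
    (fun a => \sum_(t <- s) f t a) @ F --> \sum_(t <- s) l t.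
  elim => [|t s IH].
    rewrite (_ : (fun a => _) = fun=> 0); last by apply: funext => a; rewrite big_nil.
    rewrite big_nil; exact: cvg_cst.
  rewrite (_ : (fun a => _) = fun a => f t a + \sum_(t <- s) f t a); last first.
    by apply: funext => a; rewrite big_cons.
  rewrite big_cons; exact: cvgD.
exact: gen.
Qed.

Lemma cvg_quad (e o1 o2 : R) :
  (fun a => e * (o1 + a * o2) + 2^-1 * a * (o1 + a * o2) ^+ 2) @ 0^'+ --> e * o1.
Proof.
have -> : e * o1 = e * (o1 + 0 * o2) + 2^-1 * 0 * (o1 + 0 * o2) ^+ 2.
  by rewrite !(mul0r, mulr0, addr0).
apply: cvg_at_right_filter.
apply: cvgD; apply: cvgM; try apply: cvgM; try apply: cvgD; try apply: cvgM;
  try apply: cvg_cst; try apply: cvg_id.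
Qed.

Lemma small_near (z t : R) : z != 0 -> \forall D \near 0^'+, `|D * t| < `|z|.
Proof.
move=> zn.
have b0 : 0 < `|z| / (`|t| + 1).
  by rewrite divr_gt0 // ?normr_gt0 // ltr_pwDr // normr_ge0.
near=> a.
have a0 : 0 < a by near: a; exact: nbhs_right_gt.
have ab : a < `|z| / (`|t| + 1) by near: a; exact: nbhs_right_lt.
rewrite normrM (gtr0_norm a0).
move: ab; rewrite ltr_pdivlMr ?ltr_pwDr // => ab.
apply: le_lt_trans (_ : a * `|t| <= a * (`|t| + 1)) _ => //.
by apply: ler_wpM2l; [exact: ltW|rewrite lerDl].
Unshelve. all: by end_near.
Qed.

Lemma sign_stable (z s : R) : `|s| < `|z| ->
  ((0 < z + s) = (0 < z)) /\ ((z + s < 0) = (z < 0)).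
Proof.
case: (ltgtP 0 z) => [z0|z0|<-]; last by rewrite normr0 normr_lt0.
  rewrite (gtr0_norm z0) => /ltr_normlP [H1 H2]; split; apply/idP/idP; lra.
rewrite (ltr0_norm z0) => /ltr_normlP [H1 H2]; split; apply/idP/idP; lra.
Qed.

End Lim.

Section Net.
Variables (R : realType) (d : nat) (ap am : R) (J K : finType)
  (x : K -> 'rV[R]_d) (y : K -> J -> R).
Local Notation rho := (@rho R ap am).
Local Notation dot := (@dotv R d).

Definition rhod (z t : R) := if z == 0 then rho t else (if 0 < z then ap else am) * t.

Lemma rho0 : rho 0 = 0.
Proof. by rewrite /Defs.rho lexx mulr0. Qed.

Lemma rho_homo c t : 0 <= c -> rho (c * t) = c * rho t.
Proof.
rewrite /Defs.rho le_eqVlt => /orP[/eqP<-|c0]; first by rewrite !mul0r lexx mulr0.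
by rewrite pmulr_rge0 //; case: ifP => _; rewrite mulrCA.
Qed.

Lemma rhod_homo z c t : 0 <= c -> rhod z (c * t) = c * rhod z t.
Proof. by move=> c0; rewrite /rhod; case: ifP => _; [apply: rho_homo|rewrite mulrCA]. Qed.

Lemma rho_split z t : (z != 0 -> `|t| < `|z|) -> rho (z + t) = rho z + rhod z t.
Proof.
rewrite /rhod /Defs.rho; case: (eqVneq z 0) => [->|zn /(_ isT) tz].
  by rewrite add0r lexx mulr0 add0r.
case: (ltgtP 0 z) => [z0|z0|]; last by move=> e; rewrite e eqxx in zn.
  have : 0 <= z + t.
    by move: tz; rewrite (gtr0_norm z0) => /ltr_normlP [H1 H2]; lra.
  by move=> ->; rewrite mulrDr.
have : ~~ (0 <= z + t).
  by move: tz; rewrite (ltr0_norm z0) -ltNge => /ltr_normlP [H1 H2]; lra.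
by move=> /negbTE ->; rewrite mulrDr.
Qed.

Lemma rhod_scale b z t : 0 < b -> rhod (b * z) t = rhod z t.
Proof.
move=> b0; rewrite /rhod mulf_eq0 (gt_eqF b0) /=; case: ifP => // _.
by rewrite pmulr_rgt0.
Qed.

Lemma rho_scale b z : 0 < b -> rho (b * z) = b * rho z.
Proof. by move=> b0; apply: rho_homo; exact: ltW. Qed.

Lemma rhod_lin z t c : rhod z (t + c * z) = rhod z t + c * rho z.
Proof.
rewrite /rhod /Defs.rho; case: (eqVneq z 0) => [->|zn]; first by rewrite !mulr0 addr0 lexx mulr0 addr0.
case: (ltgtP 0 z) => [z0|z0|e]; last by rewrite e eqxx in zn.
  by rewrite mulrDr mulrCA.
by rewrite mulrDr mulrCA.
Qed.

Section Hid.
Variable H : finType.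
Local Notation err := (@Defs.err R d ap am J K x y H).
Local Notation loss := (@Defs.loss R d ap am J K x y H).

Definition zz (w : H -> 'rV[R]_d) i k := dot (w i) (x k).
Definition Gh w h i j := \sum_k err w h k j * rho (zz w i k).
Definition Dw w h i j u := \sum_k err w h k j * rhod (zz w i k) (dot u (x k)).
Definition gw w h i u := \sum_j h j i * Dw w h i j u.
Definition S1 w (h : J -> H -> R) (dw : H -> 'rV[R]_d) (dh : J -> H -> R) :=
  \sum_i (\sum_j dh j i * Gh w h i j + gw w h i (dw i)).

Lemma dd_cvg w h dw dh :
  ((loss (shift_w w dw a) (shift_h h dh a) - loss w h) / a) @[a --> 0^'+]
    --> S1 w h dw dh.
Proof.
pose t i k := dot (dw i) (x k).
pose O1 k j := \sum_i (dh j i * rho (zz w i k) + h j i * rhod (zz w i k) (t i k)).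
pose O2 k j := \sum_i dh j i * rhod (zz w i k) (t i k).
pose E a := \sum_k \sum_j (err w h k j * (O1 k j + a * O2 k j)
                + 2^-1 * a * (O1 k j + a * O2 k j) ^+ 2).
have HE : E a @[a --> 0^'+] --> \sum_k \sum_j err w h k j * O1 k j.
  apply: cvg_fsum => k; apply: cvg_fsum => j; exact: cvg_quad.
have -> : S1 w h dw dh = \sum_k \sum_j err w h k j * O1 k j.
  rewrite /S1 /O1 /gw /Dw /Gh.
  transitivity (\sum_k \sum_j \sum_i err w h k j *
     (dh j i * rho (zz w i k) + h j i * rhod (zz w i k) (t i k))); last first.
    by apply: eq_bigr => k _; apply: eq_bigr => j _; rewrite mulr_sumr.
  under [RHS]eq_bigr => k _ do rewrite exchange_big /=.
  rewrite [RHS]exchange_big /=; apply: eq_bigr => i _.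
  rewrite [RHS]exchange_big /= -big_split /=; apply: eq_bigr => j _.
  rewrite !mulr_sumr -big_split /=; apply: eq_bigr => k _.
  by rewrite /t; ring.
have Hfor : forall ik : H * K, \forall a \near 0^'+,
    zz w ik.1 ik.2 != 0 -> `|a * t ik.1 ik.2| < `|zz w ik.1 ik.2|.
  move=> [i k] /=; case: (eqVneq (zz w i k) 0) => [->|zn].
    by apply: nearW => a.
  have b0 : 0 < `|zz w i k| / (`|t i k| + 1).
    by rewrite divr_gt0 // ?normr_gt0 // ltr_pwDr // normr_ge0.
  near=> a => _.
  have a0 : 0 < a by near: a; exact: nbhs_right_gt.
  have ab : a < `|zz w i k| / (`|t i k| + 1) by near: a; exact: nbhs_right_lt.
  rewrite normrM (gtr0_norm a0).
  have tn : 0 <= `|t i k| by [].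
  move: ab; rewrite ltr_pdivlMr ?ltr_pwDr // => ab.
  apply: le_lt_trans (_ : a * `|t i k| <= a * (`|t i k| + 1)) _.
    by apply: ler_wpM2l; [exact: ltW|rewrite lerDl].
  done.
have Hall := filter_forall (@at_right_proper_filter R 0) Hfor.
apply: cvg_trans HE; apply: near_eq_cvg.
near=> a.
have a0 : 0 < a by near: a; exact: nbhs_right_gt.
have Ha : forall ik : H * K, zz w ik.1 ik.2 != 0 -> `|a * t ik.1 ik.2| < `|zz w ik.1 ik.2|.
  by near: a.
have Eo : forall k j, err (shift_w w dw a) (shift_h h dh a) k j
    = err w h k j + a * (O1 k j + a * O2 k j).
  move=> k j; rewrite /Defs.err /output /shift_w /shift_h /O1 /O2.
  rewrite [RHS]addrAC; congr (_ - _).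
  rewrite mulr_sumr -big_split mulr_sumr -big_split /=; apply: eq_bigr => i _.
  rewrite dotDl dotZl rho_split; last exact: (Ha (i, k)).
  rewrite rhod_homo ?ltW // /zz /t; ring.
rewrite /E /Defs.loss.
under [X in _ = (_ * X - _) / _]eq_bigr => k _ do under eq_bigr => j _ do rewrite Eo.
rewrite -mulrBr -sumrB.
under [X in _ = (_ * X) / _]eq_bigr => k _ do rewrite -sumrB.
rewrite mulr_sumr mulr_suml; apply: eq_bigr => k _.
rewrite mulr_sumr mulr_suml; apply: eq_bigr => j _.
have an : a != 0 by rewrite gt_eqF.
by field.
Unshelve. all: by end_near.
Qed.


Lemma rhod0 z : rhod z 0 = 0.
Proof. by rewrite /rhod; case: ifP => _; rewrite ?rho0 ?mulr0. Qed.

Lemma Dw0 w h i j : Dw w h i j 0 = 0.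
Proof. by rewrite /Dw big1 // => k _; rewrite dot0l rhod0 mulr0. Qed.

Lemma gw0 w h i : gw w h i 0 = 0.
Proof. by rewrite /gw big1 // => j _; rewrite Dw0 mulr0. Qed.

Lemma stationaryP w h : stationary ap am x y w h <->
  (forall i j, Gh w h i j = 0) /\ (forall i u, 0 <= gw w h i u).
Proof.
split.
  move=> Hs.
  have S0 : forall dw dh, 0 <= S1 w h dw dh.
    move=> dw dh; have [l [Hl l0]] := Hs dw dh.
    suff -> : S1 w h dw dh = l by [].
    rewrite -(cvg_lim (@norm_hausdorff _ _) (@dd_cvg w h dw dh)); exact: (cvg_lim (@norm_hausdorff _ _) Hl).
  split.
    move=> i j.
    have E c : S1 w h (fun=> 0) (fun j' i' => if (j' == j) && (i' == i) then c else 0)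
        = c * Gh w h i j.
      rewrite /S1 (bigD1 i) //=.
      rewrite [X in _ + X]big1 => [|i' i'i]; last first.
        rewrite gw0 addr0 big1 // => j' _.
        by rewrite (negbTE i'i) andbF mul0r.
      rewrite gw0 !addr0 (bigD1 j) //= !eqxx /= big1 ?addr0 // => j' j'j.
      by rewrite (negbTE j'j) mul0r.
    have := S0 (fun=> 0) (fun j' i' => if (j' == j) && (i' == i) then 1 else 0).
    have := S0 (fun=> 0) (fun j' i' => if (j' == j) && (i' == i) then -1 else 0).
    rewrite !E mul1r mulN1r oppr_ge0 => H1 H2.
    by apply/le_anti; rewrite H1 H2.
  move=> i u.
  have := S0 (fun i' => if i' == i then u else 0) (fun _ _ => 0).
  rewrite /S1 (bigD1 i) //= eqxx [X in _ + X]big1 => [|i' i'i]; last first.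
    by rewrite (negbTE i'i) gw0 big1 ?add0r // => j _; rewrite mul0r.
  by rewrite big1 ?add0r ?addr0 // => j _; rewrite mul0r.
move=> [HG Hg] dw dh; exists (S1 w h dw dh); split; first exact: dd_cvg.
apply: sumr_ge0 => i _; rewrite big1 ?add0r // => j _.
by rewrite HG mulr0.
Qed.


Lemma dvec_Dw w h j i v : dot (dvec ap am x y w h j i v) v = Dw w h i j v.
Proof.
pose s k := dot v (x k).
pose cp k := if zz w i k == 0 then 0 < s k else 0 < zz w i k.
pose cn k := if zz w i k == 0 then s k < 0 else zz w i k < 0.
pose V := \sum_k ((if cp k then ap * err w h k j else 0)
                 + (if cn k then am * err w h k j else 0)) *: x k.
have -> : dvec ap am x y w h j i v = V.
  rewrite /dvec; apply: (lim_near_cst (@norm_hausdorff _ _)).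
  have Hk : forall k, \forall D \near 0^'+,
      ((0 < dot (w i + D *: v) (x k)) = cp k) /\ ((dot (w i + D *: v) (x k) < 0) = cn k).
    move=> k; rewrite /cp /cn; case: eqVneq => [z0|zn].
      near=> D.
      have D0 : 0 < D by near: D; exact: nbhs_right_gt.
      rewrite dotDl dotZl -/(zz w i k) z0 add0r pmulr_rgt0 // pmulr_rlt0 //.
    apply: filterS (small_near (s k) zn) => D HD.
    by rewrite dotDl dotZl -/(zz w i k); apply: sign_stable.
  apply: filterS (filter_forall (@at_right_proper_filter R 0) Hk) => D HD.
  rewrite big_mkcond /= [X in _ + X]big_mkcond /= -big_split /=; apply: eq_bigr => k _.
  have [-> ->] := HD k.
  by case: (cp k); case: (cn k) => /=; rewrite ?scalerDl ?scale0r ?add0r ?addr0.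
rewrite dot_sumZ /Dw; apply: eq_bigr => k _.
rewrite dotC -/(s k) /rhod /Defs.rho /cp /cn.
case: eqVneq => z0.
  by case: (ltgtP 0 (s k)) => [s0|s0|<-] /=; [ring|ring|rewrite !mulr0].
by case: (ltgtP 0 (zz w i k)) => [zp|zn|e] /=; [ring|ring|rewrite e eqxx in z0].
Unshelve. all: by end_near.
Qed.

Lemma tanderiv_gw w h i v : tanderiv ap am x y w h i v = gw w h i v.
Proof. by rewrite /tanderiv /gw; apply: eq_bigr => j _; rewrite dvec_Dw. Qed.

Lemma Dw_decomp w h i j v s c : 0 <= s ->
  Dw w h i j (s *: v + c *: w i) = s * Dw w h i j v + c * Gh w h i j.
Proof.
move=> s0; rewrite /Dw /Gh !mulr_sumr -big_split; apply: eq_bigr => k _ /=.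
rewrite dotDl !dotZl -/(zz w i k) rhod_lin rhod_homo //; ring.
Qed.

Lemma gw_decomp w h i v s c : 0 <= s -> (forall j, Gh w h i j = 0) ->
  gw w h i (s *: v + c *: w i) = s * gw w h i v.
Proof.
move=> s0 HG; rewrite /gw mulr_sumr; apply: eq_bigr => j _.
by rewrite Dw_decomp // HG mulr0 addr0 mulrCA.
Qed.

End Hid.

Lemma decomp (wi u : 'rV[R]_d) : (exists c, u = c *: wi) \/
  (exists v s c, tangential wi v /\ 0 < s /\ u = s *: v + c *: wi).
Proof.
pose c := if wi == 0 then 0 else dot u wi / dot wi wi.
pose p := u - c *: wi.
have up : u = p + c *: wi by rewrite /p subrK.
case: (eqVneq p 0) => p0.
  by left; exists c; rewrite up p0 add0r.
right.
have pp0 : 0 < dot p p.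
  rewrite lt_def dot_ge0 andbT; apply/negP => /eqP /dot_eq0 /eqP.
  by rewrite (negbTE p0).
pose s := Num.sqrt (dot p p).
have s0 : 0 < s by rewrite sqrtr_gt0.
exists (s^-1 *: p), s, c; split; last split => //.
  split.
    rewrite dotZl dotZr mulrA -expr2 exprVn sqr_sqrtr ?ltW //.
    by rewrite mulVf // gt_eqF.
  move=> wn; rewrite dotZr /p dotBr dotZr /c (negbTE wn).
  have ww : dot wi wi != 0.
    apply/negP => /eqP /dot_eq0 /eqP; by rewrite (negbTE wn).
  by rewrite mulfVK // dotC subrr mulr0.
by rewrite scalerA mulfV ?gt_eqF // scale1r.
Qed.

Section Hid2.
Variable H : finType.
Local Notation err := (@Defs.err R d ap am J K x y H).
Local Notation loss := (@Defs.loss R d ap am J K x y H).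

Lemma cond1P (w : H -> 'rV[R]_d) h i : (forall j, Gh w h i j = 0) ->
  ((forall v, tangential (w i) v -> tanderiv ap am x y w h i v = 0) <->
   (forall u, gw w h i u = 0)).
Proof.
move=> HG; split => [Ht u|Hu v _]; last by rewrite tanderiv_gw.
case: (decomp (w i) u) => [[c ->]|[v [s [c [tv [s0 ->]]]]]].
  by rewrite -[c *: w i]add0r -(scale0r 0) gw_decomp // mul0r.
by rewrite gw_decomp ?ltW // -tanderiv_gw Ht // mulr0.
Qed.

Lemma noescP (w : H -> 'rV[R]_d) h i : (forall j, Gh w h i j = 0) ->
  ~ escape_neuron ap am x y w h i ->
  forall u, gw w h i u = 0 -> forall j, Dw w h i j u = 0.
Proof.
move=> HG Hne u Hu j.
case: (decomp (w i) u) => [[c ->]|[v [s [c [tv [s0 E]]]]]].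
  by rewrite -[c *: w i]add0r -(scale0r 0) Dw_decomp // HG mul0r mulr0 addr0.
rewrite E Dw_decomp ?ltW // HG mulr0 addr0.
case: (eqVneq (Dw w h i j v) 0) => [->|Hn]; first by rewrite mulr0.
exfalso.
apply: Hne; exists j, v; split => //.
  rewrite tanderiv_gw; move: Hu; rewrite E gw_decomp ?ltW //.
  by move/eqP; rewrite mulf_eq0 (gt_eqF s0) /= => /eqP.
by rewrite dvec_Dw.
Qed.


Lemma coneP (w : H -> 'rV[R]_d) h i : (forall u, 0 <= gw w h i u) ->
  (forall u, gw w h i u = 0 -> forall j, Dw w h i j u = 0) ->
  forall j, exists c, 0 <= c /\ forall u, `|Dw w h i j u| <= c * gw w h i u.
Proof.
move=> Hg Hz j.
pose l (sg : {ffun K -> bool}) k :=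
  if zz w i k == 0 then (if sg k then x k else - x k) else 0.
pose sl (sg : {ffun K -> bool}) k := if zz w i k == 0 then (if sg k then ap else am)
  else (if 0 < zz w i k then ap else am).
pose B sg j := \sum_k (err w h k j * sl sg k) *: x k.
pose A sg := \sum_j' h j' i *: B sg j'.
have HB : forall sg u j, (forall k, 0 <= dot (l sg k) u) ->
    Dw w h i j u = dot (B sg j) u.
  move=> sg u j' Hu; rewrite /Dw dot_sumZ; apply: eq_bigr => k _.
  have Hk := Hu k; rewrite -mulrA; congr (_ * _).
  rewrite /rhod /sl (dotC (x k)); move: Hk; rewrite /l.
  case: eqVneq => z0 //; rewrite /Defs.rho; case: (sg k) => Hk;
    rewrite ?dotNl ?oppr_ge0 dotC in Hk.
    by rewrite Hk.
  move: Hk; rewrite le_eqVlt => /orP [/eqP ->|Hk]; first by rewrite lexx !mulr0.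
  by rewrite leNgt Hk.
have HA : forall sg u, (forall k, 0 <= dot (l sg k) u) ->
    gw w h i u = dot (A sg) u.
  move=> sg u Hu; rewrite /gw /A dot_sumZ; apply: eq_bigr => j' _.
  by rewrite (HB sg).
have Hc : forall sg, exists c, 0 <= c /\ forall u, (forall k, 0 <= dot (l sg k) u) ->
    `|dot (B sg j) u| <= c * dot (A sg) u.
  move=> sg; apply: polyhedral.
    by move=> u Hu; rewrite -(HA sg).
  by move=> u Hu; rewrite -(HA sg) // -(HB sg) // => /Hz; apply.
have [cf Hcf] := boolp.choice Hc.
exists (\sum_sg cf sg); split; first by apply: sumr_ge0 => sg _; case: (Hcf sg).
move=> u.
pose sg := [ffun k => 0 <= dot (x k) u].
have Hu : forall k, 0 <= dot (l sg k) u.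
  move=> k; rewrite /l ffunE; case: ifP => _; last by rewrite dot0l.
  case: ifP => // /negbT.
  by rewrite -ltNge dotNl oppr_ge0 => /ltW.
rewrite (HB sg) // (HA sg) //.
apply: le_trans ((Hcf sg).2 u Hu) _.
apply: ler_wpM2r; first by rewrite -(HA sg) //.
rewrite (bigD1 sg) //= lerDl; apply: sumr_ge0 => sg' _; by case: (Hcf sg').
Qed.


Lemma err_pert (w w' : H -> 'rV[R]_d) h h' k j :
  (forall i, zz w i k != 0 -> `|dot (w' i - w i) (x k)| < `|zz w i k|) ->
  err w' h' k j = err w h k j + \sum_i ((h' j i - h j i) * rho (zz w i k)
       + h' j i * rhod (zz w i k) (dot (w' i - w i) (x k))).
Proof.
move=> Hs; rewrite /Defs.err /output addrAC; congr (_ - _).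
rewrite -big_split /=; apply: eq_bigr => i _.
rewrite (_ : dot (w' i) (x k) = zz w i k + dot (w' i - w i) (x k)); last first.
  by rewrite /zz -dotDl addrC subrK.
rewrite rho_split; last exact: Hs.
ring.
Qed.

Lemma lminP (w : H -> 'rV[R]_d) h : (forall i j, Gh w h i j = 0) ->
  (forall i u, 0 <= gw w h i u) ->
  (forall i u, gw w h i u = 0 -> forall j, Dw w h i j u = 0) ->
  local_min ap am x y w h.
Proof.
move=> HG Hg Hz.
have Hc : forall ij : H * J, exists c, 0 <= c /\
    forall u, `|Dw w h ij.1 ij.2 u| <= c * gw w h ij.1 u.
  by move=> [i j]; apply: (coneP (Hg i) (Hz i)).
have [cf Hcf] := boolp.choice Hc.
pose C := \sum_ij cf ij.
have C0 : 0 <= C by apply: sumr_ge0 => ij _; case: (Hcf ij).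
have Cb : forall i j u, `|Dw w h i j u| <= C * gw w h i u.
  move=> i j u; apply: le_trans ((Hcf (i, j)).2 u) _.
  apply: ler_wpM2r => //; rewrite /C (bigD1 (i, j)) //= lerDl.
  by apply: sumr_ge0 => ij _; case: (Hcf ij).
pose nx k : R := \sum_c `|x k ord0 c|.
have nx0 : forall k, 0 <= nx k by move=> k; apply: sumr_ge0.
pose T ik : R := if zz w ik.1 ik.2 == 0 then 0 else (nx ik.2 + 1) / `|zz w ik.1 ik.2|.
have T0 : forall ik, 0 <= T ik.
  move=> ik; rewrite /T; case: ifP => // _; apply: divr_ge0 => //.
  by rewrite addr_ge0.
pose M := 1 + C * #|J|%:R + \sum_ik T ik.
have M1 : 1 <= M.
  rewrite /M -addrA lerDl addr_ge0 //; first by rewrite mulr_ge0.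
  by apply: sumr_ge0.
have M0 : 0 < M by apply: lt_le_trans M1.
exists M^-1; first by rewrite invr_gt0.
move=> w' h' Hw Hh.
have Hs : forall k i, zz w i k != 0 -> `|dot (w' i - w i) (x k)| < `|zz w i k|.
  move=> k i zn.
  have zp : 0 < `|zz w i k| by rewrite normr_gt0.
  have TM : T (i, k) <= M.
    rewrite /M (bigD1 (i, k)) //= addrCA lerDl addr_ge0 //.
      by rewrite addr_ge0 // mulr_ge0.
    by apply: sumr_ge0.
  rewrite /T /= (negbTE zn) ler_pdivrMr // in TM.
  apply: le_lt_trans (_ : `|dot (w' i - w i) (x k)| <= M^-1 * nx k) _.
    rewrite /dotv /nx mulr_sumr; apply: le_trans (ler_norm_sum _ _ _) _.
    apply: ler_sum => c _; rewrite normrM mxE; apply: ler_wpM2r => //.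
    by rewrite mxE ltW // Hw.
  rewrite ltr_pdivrMl //; move: TM; nra.
have E := fun k j => err_pert h h' j (Hs k).
pose D k j := \sum_i ((h' j i - h j i) * rho (zz w i k)
       + h' j i * rhod (zz w i k) (dot (w' i - w i) (x k))).
have key : 0 <= \sum_k \sum_j err w h k j * D k j.
  have -> : \sum_k \sum_j err w h k j * D k j
      = \sum_i \sum_j h' j i * Dw w h i j (w' i - w i).
    rewrite /D /Dw.
    under eq_bigr => k _ do under eq_bigr => j _ do rewrite mulr_sumr.
    under [LHS]eq_bigr => k _ do rewrite exchange_big /=.
    rewrite exchange_big /=; apply: eq_bigr => i _.
    rewrite exchange_big /=; apply: eq_bigr => j _.
    have G0 := HG i j; rewrite /Gh in G0.
    rewrite mulr_sumr.
    transitivity (\sum_k ((h' j i - h j i) * (err w h k j * rho (zz w i k))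
       + h' j i * (err w h k j * rhod (zz w i k) (dot (w' i - w i) (x k))))).
      by apply: eq_bigr => k _; ring.
    by rewrite big_split /= -!mulr_sumr G0 mulr0 add0r.
  apply: sumr_ge0 => i _.
  set dl := w' i - w i.
  have g0 := Hg i dl.
  have -> : \sum_j h' j i * Dw w h i j dl
      = gw w h i dl + \sum_j (h' j i - h j i) * Dw w h i j dl.
    by rewrite /gw -big_split; apply: eq_bigr => j _ /=; ring.
  have lb : - ((M^-1 * (C * gw w h i dl)) *+ #|J|)
      <= \sum_j (h' j i - h j i) * Dw w h i j dl.
    rewrite -sumr_const -sumrN; apply: ler_sum => j _.
    have : `|(h' j i - h j i) * Dw w h i j dl| <= M^-1 * (C * gw w h i dl).
      rewrite normrM; apply: ler_pM => //; first exact: ltW.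
    by rewrite ler_norml => /andP [].
  apply: le_trans (lerD (lexx _) lb).
  have CJ : C * #|J|%:R <= M.
    rewrite /M -addrA addrCA lerDl addr_ge0 //; by apply: sumr_ge0.
  have CJ1 : C * #|J|%:R * M^-1 <= 1 by rewrite ler_pdivrMr // mul1r.
  rewrite -mulr_natl subr_ge0.
  have -> : #|J|%:R * (M^-1 * (C * gw w h i dl)) = (C * #|J|%:R * M^-1) * gw w h i dl.
    by rewrite mulrA mulrC -!mulrA; congr (_ * _); rewrite mulrC -mulrA mulrC.
  by rewrite -[X in _ <= X]mul1r; apply: ler_wpM2r.
rewrite -subr_ge0; apply: le_trans key _.
rewrite /Defs.loss -mulrBr -sumrB mulr_sumr; apply: ler_sum => k _.
rewrite -sumrB mulr_sumr; apply: ler_sum => j _.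
rewrite E -/(D k j).
set e := err w h k j; set dd := D k j.
have : 0 <= dd ^+ 2 by rewrite sqr_ge0.
nra.
Qed.

End Hid2.

End Net.

Section Main.
Variables (R : realType) (d : nat) (ap am : R) (I J K L : finType)
  (x : K -> 'rV[R]_d) (y : K -> J -> R) (w : I -> 'rV[R]_d) (h : J -> I -> R)
  (i0 : I) (beta gamma : L -> R).
Hypothesis beta0 : forall l, 0 < beta l.
Hypothesis bg1 : \sum_(l : L) beta l * gamma l = 1.
Local Notation H' := (rep_hidden i0 L).
Local Notation w' := (@rep_w R d I L i0 beta w).
Local Notation h' := (@rep_h R J I L i0 gamma h).
Local Notation rho := (@Defs.rho R ap am).
Local Notation dot := (@dotv R d).

Lemma sum_sub (G : I -> R) :
  \sum_(i : {i : I | i != i0}) G (val i) = \sum_(i | i != i0) G i.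
Proof. symmetry. exact: (big_sub (fun i : I => i != i0) G). Qed.

Lemma sum_rep (F : H' -> R) :
  \sum_(u : H') F u = \sum_(i : {i : I | i != i0}) F (inl i) + \sum_l F (inr l).
Proof. by rewrite big_sumType. Qed.

Lemma out_rep z j : output ap am w' h' z j = output ap am w h z j.
Proof.
rewrite /output sum_rep /= (sum_sub (fun i => h j i * rho (dot (w i) z))).
rewrite [RHS](bigD1 i0) //= addrC; congr (_ + _).
transitivity (\sum_l (beta l * gamma l) * (h j i0 * rho (dot (w i0) z))).
  by apply: eq_bigr => l _; rewrite dotZl rho_scale //; ring.
by rewrite -mulr_suml bg1 mul1r.
Qed.

Lemma err_rep : @Defs.err R d ap am J K x y H' w' h' = @Defs.err R d ap am J K x y I w h.
Proof. by apply: funext => k; apply: funext => j; rewrite /Defs.err out_rep. Qed.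

Lemma Gh_inl i j : Gh ap am x y w' h' (inl i) j = Gh ap am x y w h (val i) j.
Proof. by rewrite /Gh err_rep. Qed.

Lemma Gh_inr l j : Gh ap am x y w' h' (inr l) j = beta l * Gh ap am x y w h i0 j.
Proof.
rewrite /Gh err_rep mulr_sumr; apply: eq_bigr => k _.
by rewrite /zz /= dotZl rho_scale //; ring.
Qed.

Lemma Dw_inl i j u : Dw ap am x y w' h' (inl i) j u = Dw ap am x y w h (val i) j u.
Proof. by rewrite /Dw err_rep. Qed.

Lemma Dw_inr l j u : Dw ap am x y w' h' (inr l) j u = Dw ap am x y w h i0 j u.
Proof.
rewrite /Dw err_rep; apply: eq_bigr => k _.
by rewrite /zz /= dotZl rhod_scale.
Qed.

Lemma gw_inl i u : gw ap am x y w' h' (inl i) u = gw ap am x y w h (val i) u.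
Proof. by rewrite /gw; apply: eq_bigr => j _; rewrite Dw_inl. Qed.

Lemma gw_inr l u : gw ap am x y w' h' (inr l) u = gamma l * gw ap am x y w h i0 u.
Proof.
rewrite /gw mulr_sumr; apply: eq_bigr => j _; rewrite Dw_inr /=; ring.
Qed.

Lemma tang_inr l v : tangential (w' (inr l)) v <-> tangential (w i0) v.
Proof.
rewrite /tangential /=; have bn := gt_eqF (beta0 l).
split => [[H1 H2]|[H1 H2]]; split => // wn.
  have := H2 ltac:(by rewrite scaler_eq0 bn).
  by rewrite dotZl => /eqP; rewrite mulf_eq0 bn /= => /eqP.
rewrite dotZl H2 ?mulr0 //.
by move: wn; rewrite scaler_eq0 bn.
Qed.

Lemma esc_inl i : escape_neuron ap am x y w' h' (inl i) <->
  escape_neuron ap am x y w h (val i).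
Proof.
split => [[j [v [tv t0 dn]]]|[j [v [tv t0 dn]]]]; exists j, v; split => //.
- by move: t0; rewrite !tanderiv_gw gw_inl.
- by move: dn; rewrite !dvec_Dw Dw_inl.
- by rewrite tanderiv_gw gw_inl -tanderiv_gw.
- by rewrite dvec_Dw Dw_inl -dvec_Dw.
Qed.

Lemma esc_inr l : escape_neuron ap am x y w' h' (inr l) <->
  exists j v, [/\ tangential (w i0) v, gamma l * gw ap am x y w h i0 v = 0
                & Dw ap am x y w h i0 j v != 0].
Proof.
split => [[j [v [tv t0 dn]]]|[j [v [tv t0 dn]]]]; exists j, v; split => //.
- exact: (proj1 (tang_inr l v)).
- by move: t0; rewrite tanderiv_gw gw_inr.
- by move: dn; rewrite dvec_Dw Dw_inr.
- exact: (proj2 (tang_inr l v)).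
- by rewrite tanderiv_gw gw_inr.
- by rewrite dvec_Dw Dw_inr.
Qed.

Lemma main_sec : stationary ap am x y w h ->
  let cond1 := forall v : 'rV[R]_d,
      tangential (w i0) v -> tanderiv ap am x y w h i0 v = 0 in
  (stationary ap am x y w' h' <-> (cond1 \/ forall l, 0 <= gamma l)) /\
  (type1_local_min ap am x y w h ->
     (type1_local_min ap am x y w' h' <-> (cond1 \/ forall l, 0 < gamma l))).
Proof.
move=> Hst cond1.
have := Hst; move/stationaryP => [HG Hg].
have HG' : forall u j, Gh ap am x y w' h' u j = 0.
  by case=> [i|l] j; rewrite ?Gh_inl ?Gh_inr HG ?mulr0.
have C1 : cond1 <-> forall u, gw ap am x y w h i0 u = 0 := cond1P (HG i0).
have statP' : stationary ap am x y w' h' <->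
    forall l u, 0 <= gamma l * gw ap am x y w h i0 u.
  split.
    move/stationaryP => [_ Hg'] l u; rewrite -gw_inr; exact: Hg'.
  move=> Hl; apply/stationaryP; split => //.
  by case=> [i|l] u; [rewrite gw_inl; exact: Hg | rewrite gw_inr; exact: Hl].
have part1 : stationary ap am x y w' h' <-> (cond1 \/ forall l, 0 <= gamma l).
  split.
    move/statP' => Hl.
    case: (boolp.pselect (forall l, 0 <= gamma l)) => [?|/boolp.existsNP [l /negP]].
      by right.
    rewrite -ltNge => gl; left; apply/C1 => u; apply/le_anti.
    by rewrite Hg andbT -(nmulr_rge0 _ gl) Hl.
  move=> Hc; apply/statP' => l u; case: Hc => [c1|gp].
    by rewrite (proj1 C1 c1) mulr0.
  by rewrite mulr_ge0.
split => //.
move=> [lm [_ nesc]].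
split.
  move=> [lm' [st' nesc']].
  have [c1|gpos] := proj1 part1 st'; first by left.
  case: (boolp.pselect cond1) => [c1|nc1]; first by left.
  right => l; rewrite lt_def gpos andbT; apply/negP => /eqP g0.
  apply: nc1 => v tv; apply/eqP/negP => tn.
  apply: (nesc' (inr l)); apply/esc_inr.
  case: (boolp.pselect (forall j, Dw ap am x y w h i0 j v = 0)) =>
     [Hall|/boolp.existsNP [j /eqP Dj]].
    exfalso; apply/tn/eqP; rewrite tanderiv_gw /gw big1 // => j _.
    by rewrite Hall mulr0.
  by exists j, v; split => //; rewrite g0 mul0r.
move=> Hc.
have st' : stationary ap am x y w' h'.
  by apply/part1; case: Hc => [c1|gp]; [left|right => l; exact: ltW].
have nesc' : forall u, ~ escape_neuron ap am x y w' h' u.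
  case=> [i|l]; first by move/esc_inl; apply: nesc.
  move/esc_inr => [j [v [tv g0 Dn]]]; apply: (nesc i0); exists j, v; split => //.
    case: Hc => [c1|gp]; first exact: c1.
    rewrite tanderiv_gw; move/eqP: g0; rewrite mulf_eq0 (gt_eqF (gp l)) /=.
    by move/eqP.
  by rewrite dvec_Dw.
split; last by split.
apply: lminP => //.
  by move: st'; move/stationaryP => [].
by move=> u v g0 j; apply: (noescP (HG' u) (nesc' u) g0).
Qed.

End Main.

Unset Implicit Arguments.

Theorem proposition1 (R : realType) (d : nat) (ap am : R)
  (I J K L : finType) (x : K -> 'rV[R]_d) (y : K -> J -> R)
  (w : I -> 'rV[R]_d) (h : J -> I -> R) (i0 : I) (beta gamma : L -> R) :
  (1 < d)%N -> ap != am ->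
  stationary ap am x y w h ->
  (forall l, 0 < beta l) -> \sum_(l : L) beta l * gamma l = 1 ->
  let w' := @rep_w R d I L i0 beta w in
  let h' := @rep_h R J I L i0 gamma h in
  let cond1 := forall v : 'rV[R]_d,
      tangential (w i0) v -> tanderiv ap am x y w h i0 v = 0 in
  (stationary ap am x y w' h' <-> (cond1 \/ forall l, 0 <= gamma l)) /\
  (type1_local_min ap am x y w h ->
     (type1_local_min ap am x y w' h' <-> (cond1 \/ forall l, 0 < gamma l))).
Proof.
move=> _ _ Hst b0 bg w' h'.
exact: (@main_sec R d ap am I J K L x y w h i0 beta gamma b0 bg Hst).
Qed.
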